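(* Let $X=\mathsf{X}_{A_0,A_1}$ be a vertex tree-shift. Then: - $X$ is uniformly strongly irreducible if and only if $X$ is uniformly block gluing; - $X$ is strongly irreducible if and only if $X$ is block gluing.
   Context: $\Sigma=\{0,1\}$. $\Sigma^*$ is the set of finite words, with $\epsilon$ the empty word. $|x|$ is the length of $x$, $\Sigma^k$ is the set of words of length $k$, and $\Sigma_n=\bigcup_{0\le k\le n}\Sigma^k$. A tree is $t:\Sigma^*\to\mathcal{A}$ with $\mathcal{A}$ finite, and we write $t_x=t(x)$. For $0$-$1$ matrices $A_0,A_1$ indexed by $\mathcal{A}$, the vertex tree-shift is $\mathsf{X}_{A_0,A_1}=\{t: A_0(t_x,t_{x0})=1,\ A_1(t_x,t_{x1})=1\ \forall x\in\Sigma^*\}$. The paper's convention is that tree-shifts of finite type are identified with vertex tree-shifts. A pattern $u$ is a map on a finite prefix-closed support $S(u)\subseteq\Sigma^*$. A pattern is accepted by $X$ if it occurs (at some node) in some $t\in X$. $B_n(X)=\{t|_{\Sigma_{n-1}}: t\in X\}$ is the set of $n$-blocks. For $w\in\Sigma^*$, $t|_{wS(v)}=v$ means $t_{wy}=v_y$ for all $y\in S(v)$. A leaf of $u$ is a $w\in S(u)$ with $w0,w1\notin S(u)$. A complete prefix code (CPC) is a finite set $P\subseteq\Sigma^*\setminus\{\epsilon\}$ such that no word of $P$ is a prefix of another, and every $x$ with $|x|\ge\max_{y\in P}|y|$ has a prefix in $P$. Patterns $u,v$ are connected through $P$ if there is $t\in X$ with $t|_{S(u)}=u$ and $t|_{wxS(v)}=v$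 for every leaf $w$ of $u$ and every $x\in P$. $X$ is: - block gluing (BG) if there is a CPC $P$ such that for every $n\ge1$ any $u,v\in B_n(X)$ are connected through $P$; - uniformly block gluing (UBG) if this holds with $P=\Sigma^k$ for some $k\ge1$; - strongly irreducible (SI) if there is a CPC $P$ through which any two patterns accepted by $X$ are connected; - uniformly strongly irreducible (USI) if this holds with $P=\Sigma^k$ for some $k\ge1$. *)

(* Defs.v *)
From mathcomp Require Import all_boot.
Set Implicit Arguments. Unset Strict Implicit. Unset Printing Implicit Defensive.

(* Words over Sigma = {0,1} are [seq bool] (false = 0, true = 1);
   the word "x0" is [rcons x false], "wx" is [w ++ x]. *)
Notation word := (seq bool).

Fixpoint words (k : nat) : seq word :=
  if k is k'.+1 then [seq b :: w | b <- [:: false; true], w <- words k']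
  else [:: [::]].

Definition Sigma_upto (n : nat) : seq word :=
  flatten [seq words k | k <- iota 0 n.+1].

Definition tree (A : finType) := word -> A.

(* Vertex tree-shift X_{A0,A1}; the 0-1 matrices indexed by A are
   given as boolean relations on A (entry = 1 iff relation holds). *)
Definition in_vshift (A : finType) (A0 A1 : rel A) (t : tree A) : Prop :=
  forall x : word, A0 (t x) (t (rcons x false)) /\ A1 (t x) (t (rcons x true)).

(* A pattern is a map u : word -> A together with a finite
   prefix-closed support S (only values on S matter). *)
Definition prefix_closed (S : seq word) : Prop :=
  forall x y : word, x ++ y \in S -> x \in S.

Definition accepted (A : finType) (A0 A1 : rel A) (S : seq word) (u : word -> A) : Prop :=
  exists t : tree A, exists x : word,
    in_vshift A0 A1 t /\ forall y, y \in S -> t (x ++ y) = u y.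

Definition is_block (A : finType) (A0 A1 : rel A) (n : nat) (u : word -> A) : Prop :=
  exists t : tree A, in_vshift A0 A1 t /\
    forall y, y \in Sigma_upto n.-1 -> t y = u y.

Definition is_leaf (S : seq word) (w : word) : Prop :=
  w \in S /\ rcons w false \notin S /\ rcons w true \notin S.

Definition is_cpc (P : seq word) : Prop :=
  (forall x, x \in P -> x != [::]) /\
  (forall x y, x \in P -> y \in P -> prefix x y -> x = y) /\
  (forall x : word, \max_(y <- P) size y <= size x ->
     exists2 y, y \in P & prefix y x).

Definition connected_through (A : finType) (A0 A1 : rel A)
  (S : seq word) (u : word -> A) (S' : seq word) (v : word -> A)
  (P : seq word) : Prop :=
  exists t : tree A, in_vshift A0 A1 t /\
    (forall y, y \in S -> t y = u y) /\
    (forall w x y, is_leaf S w -> x \in P -> y \in S' -> t (w ++ x ++ y) = v y).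

Definition blocks_connected (A : finType) (A0 A1 : rel A) (P : seq word) : Prop :=
  forall n, 1 <= n -> forall u v : word -> A,
    is_block A0 A1 n u -> is_block A0 A1 n v ->
    connected_through A0 A1 (Sigma_upto n.-1) u (Sigma_upto n.-1) v P.

Definition patterns_connected (A : finType) (A0 A1 : rel A) (P : seq word) : Prop :=
  forall (S : seq word) (u : word -> A) (S' : seq word) (v : word -> A),
    prefix_closed S -> prefix_closed S' ->
    accepted A0 A1 S u -> accepted A0 A1 S' v ->
    connected_through A0 A1 S u S' v P.

Definition block_gluing (A : finType) (A0 A1 : rel A) : Prop :=
  exists P, is_cpc P /\ blocks_connected A0 A1 P.

Definition uniformly_block_gluing (A : finType) (A0 A1 : rel A) : Prop :=
  exists k, 1 <= k /\ blocks_connected A0 A1 (words k).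

Definition strongly_irreducible (A : finType) (A0 A1 : rel A) : Prop :=
  exists P, is_cpc P /\ patterns_connected A0 A1 P.

Definition uniformly_strongly_irreducible (A : finType) (A0 A1 : rel A) : Prop :=
  exists k, 1 <= k /\ patterns_connected A0 A1 (words k).

(* Main.v *)
Require Import Defs.
From mathcomp Require Import all_boot.
From Stdlib Require Import ClassicalEpsilon.
Set Implicit Arguments. Unset Strict Implicit.

Lemma prefix_comp (p q z : word) : prefix p z -> prefix q z -> prefix p q || prefix q p.
Proof.
rewrite !prefixE => /eqP Hp /eqP Hq.
case: (leqP (size p) (size q)) => H.
- apply/orP; left; by rewrite -Hq take_takel // Hp.
- apply/orP; right; by rewrite -Hp take_takel ?Hq // ltnW.
Qed.

Lemma prefix_rcons2 (p x : word) c : prefix p (rcons x c) -> prefix p x \/ p = rcons x c.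
Proof.
move=> H; case: (leqP (size p) (size x)) => Hs.
- left; move: H; rewrite !prefixE -cats1 take_cat.
  case: ltnP => h //; have -> : size p = size x by apply/eqP; rewrite eqn_leq Hs h.
  by rewrite subnn take0 cats0 take_size.
- right; have hs := size_prefix H; rewrite size_rcons in hs.
  have e : size p = size (rcons x c) by rewrite size_rcons; apply/eqP; rewrite eqn_leq hs Hs.
  by move: H; rewrite prefixE e take_size => /eqP.
Qed.

Definition PF (Q : seq word) := forall p q, p \in Q -> q \in Q -> prefix p q -> p = q.

Definition mg (A : finType) (t : tree A) (Q : seq word) (F : word -> tree A) : tree A :=
  fun z => let i := find (fun p => prefix p z) Q in
  if i < size Q then let p := nth [::] Q i in F p (drop (size p) z) else t z.

Lemma mg_at (A : finType) (t : tree A) Q F p y : PF Q -> p \in Q -> mg t Q F (p ++ y) = F p y.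
Proof.
move=> pf pQ; rewrite /mg.
have hh : has (fun q => prefix q (p ++ y)) Q by apply/hasP; exists p => //; exact: prefix_prefix.
rewrite -has_find hh.
have n1 := nth_find [::] hh; have n2 := mem_nth [::] (etrans (esym (has_find _ _)) hh).
have : prefix (nth [::] Q (find (fun q => prefix q (p ++ y)) Q)) p.
  case/orP: (prefix_comp n1 (prefix_prefix p y)) => // h.
  by rewrite -(pf _ _ pQ n2 h) prefix_refl.
move/(pf _ _ n2 pQ) => ->; by rewrite drop_size_cat.
Qed.

Lemma mg_out (A : finType) (t : tree A) Q F z : (forall p, p \in Q -> ~~ prefix p z) -> mg t Q F z = t z.
Proof.
move=> h; rewrite /mg hasNfind ?ltnn //; apply/hasPn => p; exact: h.
Qed.

Lemma vshiftE (A : finType) (A0 A1 : rel A) t :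
  in_vshift A0 A1 t <-> forall x (c : bool), (if c then A1 else A0) (t x) (t (rcons x c)).
Proof.
split=> [h x [] | h x]; [exact: (h x).2 | exact: (h x).1 | exact: (conj (h x false) (h x true))].
Qed.

Lemma mg_X (A : finType) (A0 A1 : rel A) (t : tree A) Q F :
  in_vshift A0 A1 t -> (forall p, p \in Q -> in_vshift A0 A1 (F p)) ->
  (forall p, p \in Q -> F p [::] = t p) -> PF Q -> in_vshift A0 A1 (mg t Q F).
Proof.
move=> Xt XF Fr pf; apply/vshiftE => x c.
case: (boolP (has (fun p => prefix p x) Q)).
- case/hasP=> p pQ /prefixP [y ->]; rewrite rcons_cat !mg_at //.
  exact: (proj1 (vshiftE _ _ _) (XF p pQ)).
- move/hasPn=> hn; rewrite (mg_out _ _ hn).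
  case: (boolP (has (fun p => prefix p (rcons x c)) Q)).
  + case/hasP=> p pQ /prefix_rcons2 [h|e]; first by move: (hn p pQ); rewrite h.
    rewrite -[rcons x c]cats0 -e mg_at // Fr // e.
    exact: (proj1 (vshiftE _ _ _) Xt).
  + move/hasPn=> hn2; rewrite (mg_out _ _ hn2); exact: (proj1 (vshiftE _ _ _) Xt).
Qed.

Lemma mg_root (A : finType) (t : tree A) Q F : PF Q -> (forall p, p \in Q -> F p [::] = t p) ->
  mg t Q F [::] = t [::].
Proof.
move=> pf Fr; case: (boolP ([::] \in Q)) => h.
- by rewrite -[[::]]cat0s mg_at // Fr.
- rewrite mg_out // => p pQ; rewrite prefixs0; apply/eqP=> e; by move: h; rewrite -e pQ.
Qed.

Lemma mem_words k (x : word) : (x \in words k) = (size x == k).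
Proof.
elim: k x => [|k IH] x; first by case: x.
apply/allpairsP/idP.
- by case=> [[b w]] /= [_ hw ->]; rewrite /= eqSS -IH.
- case: x => [|b w] //= hs; exists (b, w) => /=; split => //; first by case: b.
  by rewrite IH.
Qed.

Lemma mem_Sigma n (x : word) : (x \in Sigma_upto n) = (size x <= n).
Proof.
apply/flatten_mapP/idP.
- by case=> k; rewrite mem_iota mem_words add0n ltnS => /andP[_ h] /eqP ->.
- move=> h; exists (size x); last by rewrite mem_words.
  by rewrite mem_iota add0n ltnS h.
Qed.

Lemma shiftX (A : finType) (A0 A1 : rel A) (t : tree A) x :
  in_vshift A0 A1 t -> in_vshift A0 A1 (fun z => t (x ++ z)).
Proof. by move=> h z; have := h (x ++ z); rewrite !rcons_cat. Qed.

Section Main.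
Variables (A : finType) (A0 A1 : rel A).

Lemma SI_to_BG P : patterns_connected A0 A1 P -> blocks_connected A0 A1 P.
Proof.
move=> H n n1 u v bu bv; apply: H.
- by move=> x y; rewrite !mem_Sigma size_cat => h; apply: leq_trans h; exact: leq_addr.
- by move=> x y; rewrite !mem_Sigma size_cat => h; apply: leq_trans h; exact: leq_addr.
- by case: bu => t [Xt h]; exists t, [::]; split.
- by case: bv => t [Xt h]; exists t, [::]; split.
Qed.

Lemma leaf_prefix (S : seq word) p y : prefix_closed S ->
  p \in S -> rcons p false \notin S -> rcons p true \notin S ->
  y \in S -> prefix p y -> p = y.
Proof.
move=> pc pS n1 n2 yS /prefixP [[|c r] e]; first by rewrite e cats0.
have : rcons p c \in S by apply: (pc _ r); rewrite cat_rcons -e.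
by case: c {e}; rewrite ?(negbTE n1) ?(negbTE n2).
Qed.

Lemma BG_to_SI P : PF P -> blocks_connected A0 A1 P -> patterns_connected A0 A1 P.
Proof.
move=> pf H S u S' v pcS pcS' [t0 [x0 [X0 hu]]] [t1 [x1 [X1 hv]]].
pose T0 := fun z => t0 (x0 ++ z). pose T1 := fun z => t1 (x1 ++ z).
have XT0 : in_vshift A0 A1 T0 by exact: shiftX.
have XT1 : in_vshift A0 A1 T1 by exact: shiftX.
have Hr : forall w, exists r, in_vshift A0 A1 r /\ r [::] = T0 w /\
    forall x, x \in P -> r x = T1 [::].
  move=> w; case: (H 1 isT (fun _ => T0 w) (fun _ => T1 [::])).
  - exists (fun z => T0 (w ++ z)); split; first exact: shiftX.
    by move=> [|b y] //=; rewrite cats0.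
  - by exists T1; split => //; case.
  - move=> r [Xr [h1 h2]]; exists r; split => //; split; first by apply: h1; rewrite mem_Sigma.
    move=> x xP; have := h2 [::] x [::]; rewrite /= cats0 => h3; apply: h3 => //; try by rewrite mem_Sigma.
    all: try by split; rewrite ?mem_Sigma.
pose rr w := proj1_sig (constructive_indefinite_description _ (Hr w)).
have rrP w : in_vshift A0 A1 (rr w) /\ rr w [::] = T0 w /\ forall x, x \in P -> rr w x = T1 [::].
  exact: (proj2_sig (constructive_indefinite_description _ (Hr w))).
pose R w := mg (rr w) P (fun _ => T1).
have R0 w : R w [::] = T0 w.
  rewrite /R mg_root //; first by case: (rrP w) => _ [].
  by move=> p pP; case: (rrP w) => _ [_ ->].
have XR w : in_vshift A0 A1 (R w).
  apply: mg_X => //; first by case: (rrP w).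
  by move=> p pP; case: (rrP w) => _ [_ ->].
pose L := filter (fun w => (rcons w false \notin S) && (rcons w true \notin S)) S.
have pfL : PF L.
  move=> p q; rewrite !mem_filter => /andP[/andP[n1 n2] pS] /andP[_ qS].
  exact: (leaf_prefix pcS pS n1 n2 qS).
exists (mg T0 L R); split; [|split].
- by apply: mg_X => // p _.
- move=> y yS; case: (boolP (y \in L)) => yL.
  + by rewrite -[y]cats0 mg_at // R0 /T0 cats0 hu.
  + rewrite mg_out; first exact: hu.
    move=> p; rewrite mem_filter => /andP[/andP[n1 n2] pS]; apply/negP => hp.
    move: yL; rewrite -(leaf_prefix pcS pS n1 n2 yS hp) mem_filter n1 n2 pS.
    by [].
- move=> w x y [wS [n1 n2]] xP yS'.
  have wL : w \in L by rewrite mem_filter n1 n2 wS.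
  by rewrite mg_at // /R mg_at // /T1 hv.
Qed.

End Main.

Lemma PF_words k : PF (words k).
Proof.
move=> p q; rewrite !mem_words => /eqP hp /eqP hq.
by rewrite prefixE hp -hq take_size => /eqP.
Qed.

Theorem theorem3p6 (A : finType) (A0 A1 : rel A) :
  (uniformly_strongly_irreducible A0 A1 <-> uniformly_block_gluing A0 A1) /\
  (strongly_irreducible A0 A1 <-> block_gluing A0 A1).
Proof.
split; split.
- by case=> k [k1 h]; exists k; split => //; exact: SI_to_BG.
- by case=> k [k1 h]; exists k; split => //; apply: BG_to_SI => //; exact: PF_words.
- by case=> P [cP h]; exists P; split => //; exact: SI_to_BG.
- case=> P [cP h]; exists P; split => //; apply: BG_to_SI => //.
  by case: cP => _ [].
Qed.
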